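(* Let $(U_1,U_2)$ have joint CDF equal to the power-divergence copula $C_\lambda$, and define the tail-dependence coefficients $T_L(\lambda)=\lim_{u\downarrow0}\Pr(U_1\le u\mid U_2\le u)$ and $T_U(\lambda)=\lim_{u\uparrow1}\Pr(U_1\ge u\mid U_2\ge u)$. Then (i) $T_L(\lambda)=2^{1/(\lambda+1)}$ if $\lambda<-1$ and $T_L(\lambda)=0$ if $\lambda\ge-1$; (ii) $T_U(\lambda)=2-\sqrt{2}$ for every $\lambda\in(-\infty,\infty)$.
   Context: For $\lambda\in\mathbb{R}$ define $\phi_\lambda$ on $[0,\infty)$ by $\phi_\lambda(x)=\frac{1}{\lambda(\lambda+1)}(x^{\lambda+1}-x+\lambda(1-x))$ for $\lambda\neq-1,0$; $\phi_0(x)=1-x+x\log x$; $\phi_{-1}(x)=x-1-\log x$; values at $x=0$ are limits, so $\phi_\lambda(0)=1/(\lambda+1)$ for $\lambda>-1$ and $\phi_\lambda(0)=\infty$ for $\lambda\le-1$. On $[0,1]$, $\phi_\lambda$ is convex, strictly decreasing, $\phi_\lambda(1)=0$. The pseudoinverse is $\phi_\lambda^{[-1]}(t)=\phi_\lambda^{-1}(t)$ (inverse of $\phi_\lambda|_{[0,1]}$) for $0\le t<\phi_\lambda(0)$ and $0$ for $t\ge\phi_\lambda(0)$. The power-divergence (PD) copula is $C_\lambda(u_1,u_2)=\phi_\lambda^{[-1]}(\phi_\lambda(u_1)+\phi_\lambda(u_2))$, $u_1,u_2\in[0,1]$ (with $\phi_\lambda^{[-1]}(\infty)=0$). *)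

(* Defs.v *)
From Stdlib Require Import Reals Lra ClassicalEpsilon.
From Coquelicot Require Import Coquelicot.
Open Scope R_scope.

(* Power-divergence generator phi_lambda on [0,oo), with values in Rbar so that
   phi_lambda(0) = +oo for lambda <= -1.  (Values for x < 0 are irrelevant.) *)
Definition phi (lam x : R) : Rbar :=
  if Rlt_dec 0 x then
    Finite (
      if Req_EM_T lam 0 then 1 - x + x * ln x
      else if Req_EM_T lam (-1) then x - 1 - ln x
      else (Rpower x (lam + 1) - x + lam * (1 - x)) / (lam * (lam + 1)))
  else (* x = 0 : limiting value *)
    if Rlt_dec (-1) lam then Finite (1 / (lam + 1)) else p_infty.

(* Inverse of phi_lambda restricted to [0,1] (chosen classically; it is the
   unique x in [0,1] with phi_lambda x = t when t lies in the range). *)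
Definition phi_inv (lam t : R) : R :=
  epsilon (inhabits 0) (fun x => 0 <= x <= 1 /\ phi lam x = Finite t).

Definition phi_pinv (lam : R) (t : Rbar) : R :=
  match t with
  | Finite t' =>
      if Rle_dec 0 t' then
        if Rbar_lt_dec (Finite t') (phi lam 0) then phi_inv lam t' else 0
      else 0
  | _ => 0
  end.

Definition PDcopula (lam u1 u2 : R) : R :=
  phi_pinv lam (Rbar_plus (phi lam u1) (phi lam u2)).

(* For (U1,U2) with joint CDF C (uniform margins, continuous):
     Pr(U1 <= u | U2 <= u) = C(u,u) / u,
     Pr(U1 >= u | U2 >= u) = (1 - 2u + C(u,u)) / (1 - u). *)
Definition lower_cond (lam u : R) : R := PDcopula lam u u / u.
Definition upper_cond (lam u : R) : R := (1 - 2 * u + PDcopula lam u u) / (1 - u).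

(* Main.v *)
Require Import Defs.
From Stdlib Require Import Reals Lra ClassicalEpsilon.
From Coquelicot Require Import Coquelicot.
Open Scope R_scope.

Definition F (lam x : R) : R :=
  if Req_EM_T lam 0 then 1 - x + x * ln x
  else if Req_EM_T lam (-1) then x - 1 - ln x
  else (Rpower x (lam + 1) - x + lam * (1 - x)) / (lam * (lam + 1)).
Definition F1 (lam x : R) : R :=
  if Req_EM_T lam 0 then ln x else (Rpower x lam - 1) / lam.
Definition F2 (lam x : R) : R := Rpower x (lam - 1).

Lemma phi_pos lam x : 0 < x -> phi lam x = Finite (F lam x).
Proof. intros Hx; unfold phi, F; destruct (Rlt_dec 0 x); [reflexivity|lra]. Qed.

Lemma is_derive_Rpower a x : 0 < x ->
  is_derive (fun y => Rpower y a) x (a * Rpower x (a - 1)).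
Proof. intros Hx; apply is_derive_Reals, derivable_pt_lim_power, Hx. Qed.

Lemma Derive_Rpower a x : 0 < x -> Derive (fun y => Rpower y a) x = a * Rpower x (a - 1).
Proof. intros; apply is_derive_unique, is_derive_Rpower; auto. Qed.

Lemma dF lam x : 0 < x -> is_derive (F lam) x (F1 lam x).
Proof.
  intros Hx. unfold F, F1.
  destruct (Req_EM_T lam 0) as [H0|H0].
  - auto_derive; [lra|]. field; lra.
  - destruct (Req_EM_T lam (-1)) as [H1|H1].
    + subst lam. auto_derive; [lra|].
      replace (-1) with (-(1)) by ring. rewrite Rpower_Ropp, Rpower_1 by lra. field; lra.
    + auto_derive.
      * exists ((lam + 1) * Rpower x (lam + 1 - 1)). apply is_derive_Rpower; auto. 
      * rewrite Derive_Rpower by auto. replace (lam + 1 - 1) with lam by ring.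
        field. split; auto. intros H; apply H1; lra.
Qed.

Lemma dF1 lam x : 0 < x -> is_derive (F1 lam) x (F2 lam x).
Proof.
  intros Hx. unfold F1, F2.
  destruct (Req_EM_T lam 0) as [H0|H0].
  - subst lam. auto_derive; [lra|]. replace (0 - 1) with (-(1)) by ring.
    rewrite Rpower_Ropp, Rpower_1 by lra. field; lra.
  - auto_derive.
    * exists (lam * Rpower x (lam - 1)). apply is_derive_Rpower; auto.
    * rewrite Derive_Rpower by auto. field. auto.
Qed.

Lemma exple x y : x <= y -> exp x <= exp y.
Proof. intros [H|H]; [apply Rlt_le, exp_increasing; auto | subst; lra]. Qed.
Lemma lnle x y : 0 < x -> x <= y -> ln x <= ln y.
Proof. intros Hx [H|H]; [apply Rlt_le, ln_increasing; auto | subst; lra]. Qed.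
Lemma ln_le_sub1 y : 0 < y -> ln y <= y - 1.
Proof. intros Hy. pose proof (exp_ineq1_le (ln y)). rewrite exp_ln in H; lra. Qed.

Lemma Rpower_1_l a : Rpower 1 a = 1.
Proof. unfold Rpower. rewrite ln_1, Rmult_0_r, exp_0. reflexivity. Qed.
Lemma Rpower_pos x a : 0 < Rpower x a.
Proof. unfold Rpower. apply exp_pos. Qed.

Lemma F_1 lam : F lam 1 = 0.
Proof. unfold F. rewrite ln_1, Rpower_1_l.
  destruct (Req_EM_T lam 0); [lra|]. destruct (Req_EM_T lam (-1)); [lra|].
  unfold Rdiv. replace (1 - 1 + lam * (1 - 1)) with 0 by ring. ring. Qed.
Lemma F1_1 lam : F1 lam 1 = 0.
Proof. unfold F1. rewrite ln_1, Rpower_1_l.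
  destruct (Req_EM_T lam 0); [lra|]. unfold Rdiv. ring. Qed.
Lemma F2_pos lam x : 0 < F2 lam x.
Proof. apply Rpower_pos. Qed.

Lemma deriv_cont g dg x : is_derive g x dg -> continuity_pt g x.
Proof. intros H. apply continuity_pt_filterlim. exact (ex_derive_continuous g x (ex_intro _ dg H)). Qed.

Lemma mvt g dg a b : 0 < a -> a <= b -> (forall x, 0 < x -> is_derive g x (dg x)) ->
  exists c, a <= c <= b /\ g b - g a = dg c * (b - a).
Proof.
  intros Ha Hab Hd. destruct (MVT_gen g a b dg) as [c [Hc E]].
  - intros x Hx. apply Hd. rewrite Rmin_left in Hx; lra.
  - intros x Hx. apply (deriv_cont _ (dg x)). apply Hd. rewrite Rmin_left in Hx; lra.
  - exists c. rewrite Rmin_left, Rmax_right in Hc by lra. auto.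
Qed.

Lemma F1_le lam x : 0 < x <= 1 -> F1 lam x <= 0.
Proof. intros Hx. destruct (mvt (F1 lam) (F2 lam) x 1) as [c [Hc E]]; try lra.
  intros; apply dF1; auto. rewrite F1_1 in E. pose proof (F2_pos lam c). nra. Qed.
Lemma F1_lt lam x : 0 < x < 1 -> F1 lam x < 0.
Proof. intros Hx. destruct (mvt (F1 lam) (F2 lam) x 1) as [c [Hc E]]; try lra.
  intros; apply dF1; auto. rewrite F1_1 in E. pose proof (F2_pos lam c). nra. Qed.

Lemma F_decr lam x y : 0 < x < y -> y <= 1 -> F lam y < F lam x.
Proof. intros Hxy Hy. set (m := (x + y) / 2).
  destruct (mvt (F lam) (F1 lam) x m) as [c [Hc E]]; try (unfold m; lra).
  intros; apply dF; auto.
  destruct (mvt (F lam) (F1 lam) m y) as [c' [Hc' E']]; try (unfold m; lra).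
  intros; apply dF; auto.
  assert (F1 lam c < 0) by (apply F1_lt; unfold m in *; lra).
  assert (F1 lam c' <= 0) by (apply F1_le; unfold m in *; lra).
  unfold m in *. nra. Qed.

Lemma F_pos lam x : 0 < x < 1 -> 0 < F lam x.
Proof. intros. rewrite <- (F_1 lam). apply F_decr; lra. Qed.

Lemma F_cont lam x : 0 < x -> continuity_pt (F lam) x.
Proof. intros; apply (deriv_cont _ (F1 lam x)); apply dF; auto. Qed.

Lemma F_quad_up lam a M y : 0 < a -> a <= y <= 1 ->
  (forall s, a <= s <= 1 -> F2 lam s <= M) -> F lam y <= M * (1 - y) ^ 2 / 2.
Proof.
  intros Ha Hy HM.
  set (g := fun s => F lam s - M * (1 - s) ^ 2 / 2).
  set (g1 := fun s => F1 lam s + M * (1 - s)).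
  assert (Hg : forall s, 0 < s -> is_derive g s (g1 s)).
  { intros s Hs. unfold g, g1. auto_derive.
    - exists (F1 lam s). apply dF; auto.
    - replace (Derive (fun x : R => F lam x) s) with (F1 lam s); [field|]. symmetry; apply is_derive_unique; apply dF; auto. }
  assert (Hg1 : forall s, a <= s <= 1 -> 0 <= g1 s).
  { intros s Hs. destruct (mvt (F1 lam) (F2 lam) s 1) as [c [Hc E]]; try lra.
    intros; apply dF1; auto. rewrite F1_1 in E.
    assert (F2 lam c <= M) by (apply HM; lra). unfold g1. nra. }
  destruct (mvt g g1 y 1) as [c [Hc E]]; try lra; auto.
  assert (0 <= g1 c) by (apply Hg1; lra).
  unfold g in E. rewrite F_1 in E. nra.
Qed.

Lemma F_quad_lo lam a m y : 0 < a -> a <= y <= 1 ->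
  (forall s, a <= s <= 1 -> m <= F2 lam s) -> m * (1 - y) ^ 2 / 2 <= F lam y.
Proof.
  intros Ha Hy HM.
  set (g := fun s => F lam s - m * (1 - s) ^ 2 / 2).
  set (g1 := fun s => F1 lam s + m * (1 - s)).
  assert (Hg : forall s, 0 < s -> is_derive g s (g1 s)).
  { intros s Hs. unfold g, g1. auto_derive.
    - exists (F1 lam s). apply dF; auto.
    - replace (Derive (fun x : R => F lam x) s) with (F1 lam s); [field|]. symmetry; apply is_derive_unique; apply dF; auto. }
  assert (Hg1 : forall s, a <= s <= 1 -> g1 s <= 0).
  { intros s Hs. destruct (mvt (F1 lam) (F2 lam) s 1) as [c [Hc E]]; try lra.
    intros; apply dF1; auto. rewrite F1_1 in E.
    assert (m <= F2 lam c) by (apply HM; lra). unfold g1. nra. }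
  destruct (mvt g g1 y 1) as [c [Hc E]]; try lra; auto.
  assert (g1 c <= 0) by (apply Hg1; lra).
  unfold g in E. rewrite F_1 in E. nra.
Qed.

Lemma F2_bounds lam a s : 0 < a -> a <= s <= 1 ->
  exp (- (Rabs (lam - 1) * - ln a)) <= F2 lam s <= exp (Rabs (lam - 1) * - ln a).
Proof.
  intros Ha Hs. unfold F2, Rpower.
  assert (ln a <= ln s) by (apply lnle; lra).
  assert (ln s <= 0) by (rewrite <- ln_1; apply lnle; lra).
  assert (Rabs ((lam - 1) * ln s) <= Rabs (lam - 1) * - ln a).
  { rewrite Rabs_mult. rewrite (Rabs_left1 (ln s)) by lra.
    apply Rmult_le_compat_l; [apply Rabs_pos|lra]. }
  revert H1. unfold Rabs at 1. destruct (Rcase_abs ((lam - 1) * ln s)); intros H1;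
  split; apply exple; rewrite Rmult_comm; lra.
Qed.

Lemma phi0 lam : phi lam 0 = if Rlt_dec (-1) lam then Finite (1 / (lam + 1)) else p_infty.
Proof. unfold phi. destruct (Rlt_dec 0 0); [lra|reflexivity]. Qed.

Lemma pinv_spec lam t : 0 <= t -> Rbar_lt (Finite t) (phi lam 0) ->
  (exists a, 0 < a <= 1 /\ t <= F lam a) ->
  0 < phi_pinv lam (Finite t) <= 1 /\ F lam (phi_pinv lam (Finite t)) = t.
Proof.
  intros Ht Hlt [a [Ha Hta]].
  unfold phi_pinv. destruct (Rle_dec 0 t) as [_|]; [|lra].
  destruct (Rbar_lt_dec (Finite t) (phi lam 0)) as [_|]; [|contradiction].
  assert (Hex : exists x, 0 <= x <= 1 /\ phi lam x = Finite t).
  { destruct (Req_dec t (F lam a)) as [E|Ne].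
    - exists a. split; [lra|]. rewrite phi_pos by lra. congruence.
    - destruct (Req_dec t 0) as [E0|N0].
      + exists 1. split; [lra|]. rewrite phi_pos by lra. rewrite F_1, E0; reflexivity.
      + assert (Ha1 : a < 1).
        { destruct (Req_dec a 1); [subst; rewrite F_1 in Hta; lra | lra]. }
        destruct (Ranalysis5.IVT_interv (fun z => t - F lam z) a 1) as [z [Hz Ez]].
        * intros b Hb. apply continuity_pt_minus; [apply continuity_pt_const; intros ? ?; reflexivity|].
          apply F_cont; lra.
        * lra.
        * lra.
        * rewrite F_1; lra.
        * exists z. split; [lra|]. rewrite phi_pos by lra. f_equal; lra. }
  pose proof (epsilon_spec (inhabits 0) (fun x => 0 <= x <= 1 /\ phi lam x = Finite t) Hex) as [Hx Ep].
  unfold phi_inv. set (x := epsilon _ _) in *.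
  destruct (Req_dec x 0) as [X0|X0].
  - rewrite X0 in Ep. rewrite Ep in Hlt. simpl in Hlt. lra.
  - rewrite phi_pos in Ep by lra. injection Ep; intros; split; [lra|auto].
Qed.

Lemma PD_eq lam u : 0 < u -> PDcopula lam u u = phi_pinv lam (Finite (2 * F lam u)).
Proof. intros Hu. unfold PDcopula. rewrite phi_pos by auto. replace (2 * F lam u) with (F lam u + F lam u) by ring. reflexivity. Qed.

Lemma at_right0_intro (P : R -> Prop) d : 0 < d -> (forall y, 0 < y < d -> P y) -> at_right 0 P.
Proof.
  intros Hd H. exists (mkposreal d Hd). intros y Hy Hy0. apply H. split; auto.
  unfold ball in Hy; simpl in Hy; unfold AbsRing_ball, abs, minus, plus, opp in Hy; simpl in Hy.
  rewrite Rabs_right in Hy by lra. lra.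
Qed.
Lemma at_left1_intro (P : R -> Prop) d : 0 < d -> (forall y, 1 - d < y < 1 -> P y) -> at_left 1 P.
Proof.
  intros Hd H. exists (mkposreal d Hd). intros y Hy Hy0. apply H. split; auto.
  unfold ball in Hy; simpl in Hy; unfold AbsRing_ball, abs, minus, plus, opp in Hy; simpl in Hy.
  rewrite Rabs_left in Hy by lra. lra.
Qed.
Lemma ball_R (x y e : R) : Rabs (y - x) < e -> ball x e y.
Proof. intros H. unfold ball; simpl; unfold AbsRing_ball, abs, minus, plus, opp; simpl. exact H. Qed.

Lemma sqrt_approx Q rho e : 1 <= Q -> 2 * Q - 2 < e -> 0 <= rho ->
  rho * rho <= 2 * Q -> 2 <= Q * (rho * rho) -> Rabs (sqrt 2 - rho) < e.
Proof.
  intros HQ He Hr H1 H2. set (s := sqrt 2).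
  assert (Hs2 : s * s = 2) by (apply sqrt_sqrt; lra).
  assert (Hs1 : 1 < s).
  { unfold s. rewrite <- sqrt_1. apply sqrt_lt_1; lra. }
  destruct (Rle_dec rho s).
  - rewrite Rabs_right by lra.
    assert (s - rho <= (s - rho) * (s + rho)) by nra.
    assert (Q * (2 - rho * rho) <= 2 * Q - 2) by nra.
    assert (2 - rho * rho <= 2 * Q - 2) by nra.
    nra.
  - rewrite Rabs_left by lra.
    assert (rho - s <= (rho - s) * (s + rho)) by nra.
    nra.
Qed.

Lemma upper lam : filterlim (upper_cond lam) (at_left 1) (locally (2 - sqrt 2)).
Proof.
  apply filterlim_locally. intros eps.
  set (L := Rabs (lam - 1)).
  assert (HL : 0 <= L) by apply Rabs_pos.
  assert (Hl0 : 0 < ln (1 + eps / 2)).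
  { rewrite <- ln_1. apply ln_increasing; [lra|]. pose proof (cond_pos eps). lra. }
  set (th := ln (1 + eps / 2) / (2 * L + 1)).
  assert (Hth : 0 < th) by (unfold th; apply Rdiv_lt_0_compat; lra).
  assert (Hth2 : 2 * L * th < ln (1 + eps / 2)).
  { unfold th. apply (Rmult_lt_reg_r (2 * L + 1)); [lra|].
    field_simplify; [|lra]. nra. }
  set (a := exp (- th)).
  assert (Ha0 : 0 < a) by apply exp_pos.
  assert (Ha1 : a < 1) by (unfold a; rewrite <- exp_0; apply exp_increasing; lra).
  set (K := exp (L * - ln a)).
  assert (HK : K = exp (L * th)) by (unfold K, a; rewrite ln_exp; f_equal; ring).
  assert (HK1 : 1 <= K) by (rewrite HK, <- exp_0; apply exple; nra).
  assert (HKK : K * K < 1 + eps / 2).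
  { rewrite HK, <- exp_plus. rewrite <- (exp_ln (1 + eps / 2)) by (pose proof (cond_pos eps); lra).
    apply exp_increasing. lra. }
  assert (HF2 : forall s, a <= s <= 1 -> / K <= F2 lam s <= K).
  { intros s Hs. pose proof (F2_bounds lam a s Ha0 Hs) as B. fold L K in B.
    rewrite exp_Ropp in B. exact B. }
  assert (HKp : 0 < K) by lra.
  set (r := if Rlt_dec (-1) lam then 1 / (lam + 1) else 1).
  assert (Hr : 0 < r).
  { unfold r. destruct (Rlt_dec (-1) lam); [apply Rdiv_lt_0_compat; lra | lra]. }
  assert (HFa : 0 < F lam a) by (apply F_pos; lra).
  set (eta := Rmin (F lam a) r).
  assert (Heta : 0 < eta) by (unfold eta; apply Rmin_pos; auto).
  destruct (proj1 (filterlim_locally _ _) (proj1 (continuity_pt_filterlim _ _) (F_cont lam 1 Rlt_0_1))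
     (mkposreal (eta / 2) ltac:(lra))) as [d1 Hd1].
  apply (at_left1_intro _ (Rmin (1 - a) d1)).
  { apply Rmin_pos; [lra | apply cond_pos]. }
  intros u Hu.
  assert (Hua : a < u).
  { pose proof (Rmin_l (1 - a) d1). lra. }
  assert (HFu : F lam u < eta / 2).
  { assert (B : ball 1 d1 u).
    { apply ball_R. rewrite Rabs_left by lra. pose proof (Rmin_r (1 - a) d1). lra. }
    specialize (Hd1 u B). unfold ball in Hd1; simpl in Hd1;
    unfold AbsRing_ball, abs, minus, plus, opp in Hd1; simpl in Hd1.
    rewrite F_1 in Hd1. apply Rabs_def2 in Hd1. lra. }
  assert (HFu0 : 0 < F lam u) by (apply F_pos; lra).
  assert (Hea : eta <= F lam a) by apply Rmin_l.
  assert (Her : eta <= r) by apply Rmin_r.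
  destruct (pinv_spec lam (2 * F lam u)) as [Hc Ec].
  - lra.
  - rewrite phi0. unfold r in Her. destruct (Rlt_dec (-1) lam); simpl; lra.
  - exists a. split; lra.
  - unfold upper_cond. rewrite PD_eq by lra.
    set (c := phi_pinv lam (Finite (2 * F lam u))) in *.
    assert (Hca : a <= c).
    { destruct (Rle_dec a c) as [|N]; auto. exfalso.
      assert (F lam a < F lam c) by (apply F_decr; lra). lra. }
    pose proof (F_quad_up lam a K c Ha0 (conj Hca (proj2 Hc)) ltac:(intros s Hs; apply HF2; auto)) as U1.
    pose proof (F_quad_lo lam a (/ K) c Ha0 (conj Hca (proj2 Hc)) ltac:(intros s Hs; apply HF2; auto)) as L1.
    pose proof (F_quad_up lam a K u Ha0 ltac:(lra) ltac:(intros s Hs; apply HF2; auto)) as U2.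
    pose proof (F_quad_lo lam a (/ K) u Ha0 ltac:(lra) ltac:(intros s Hs; apply HF2; auto)) as L2.
    set (v := 1 - c) in *. set (w := 1 - u) in *.
    assert (Hw : 0 < w) by (unfold w; lra).
    assert (Hv : 0 <= v) by (unfold v; lra).
    assert (Hup : v * v <= 2 * (K * K) * (w * w)).
    { assert (/ K * v ^ 2 / 2 <= K * w ^ 2) by lra.
      apply (Rmult_le_compat_l (2 * K)) in H; [|lra].
      replace (2 * K * (/ K * v ^ 2 / 2)) with (v * v) in H by (field; lra). nra. }
    assert (Hlo : 2 * (w * w) <= (K * K) * (v * v)).
    { assert (2 * (/ K * w ^ 2 / 2) <= K * v ^ 2 / 2) by lra.
      apply (Rmult_le_compat_l (2 * K)) in H; [|lra].
      replace (2 * K * (2 * (/ K * w ^ 2 / 2))) with (2 * (w * w)) in H by (field; lra). nra. }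
    apply ball_R.
    replace ((1 - 2 * u + c) / w - (2 - sqrt 2)) with (sqrt 2 - v / w)
      by (unfold v, w; field; lra).
    apply (sqrt_approx (K * K)); try nra.
    + apply Rmult_le_pos; [lra | apply Rlt_le, Rinv_0_lt_compat; lra].
    + replace (v / w * (v / w)) with ((v * v) / (w * w)) by (field; lra).
      apply Rle_div_l; nra.
    + replace (v / w * (v / w)) with ((v * v) / (w * w)) by (field; lra).
      replace (K * K * (v * v / (w * w))) with ((K * K) * (v * v) / (w * w)) by (field; lra).
      apply Rle_div_r; nra.
Qed.

Lemma pinv_zero lam t : 0 <= t -> -1 < lam -> 1 / (lam + 1) <= t -> phi_pinv lam (Finite t) = 0.
Proof.
  intros Ht Hl Hle. unfold phi_pinv. destruct (Rle_dec 0 t); [|reflexivity].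
  destruct (Rbar_lt_dec (Finite t) (phi lam 0)) as [H|H]; [|reflexivity].
  rewrite phi0 in H. destruct (Rlt_dec (-1) lam); [|lra]. simpl in H. lra.
Qed.

Lemma lower_gt lam : -1 < lam -> filterlim (lower_cond lam) (at_right 0) (locally 0).
Proof.
  intros Hl.
  assert (Hd : exists d, 0 < d /\ forall u, 0 < u < d -> 1 / (lam + 1) <= 2 * F lam u).
  { unfold F. destruct (Req_EM_T lam 0) as [H0|H0].
    - subst lam. exists (1/64). split; [lra|]. intros u Hu.
      set (v := sqrt u).
      assert (Hvv : v * v = u) by (apply sqrt_sqrt; lra).
      assert (Hv : 0 < v) by (apply sqrt_lt_R0; lra).
      assert (Hv8 : v < 1/8) by nra.
      assert (Hln : ln u = 2 * ln v) by (rewrite <- Hvv, ln_mult by lra; ring).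
      assert (Hlv : ln (/ v) <= / v - 1) by (apply ln_le_sub1; apply Rinv_0_lt_compat; lra).
      rewrite ln_Rinv in Hlv by lra.
      assert (u * ln u >= 2 * u - 2 * v).
      { rewrite Hln. assert (ln v >= 1 - / v) by lra.
        assert (u * / v = v) by (rewrite <- Hvv; field; lra).
        nra. }
      nra.
    - destruct (Req_EM_T lam (-1)) as [H1|H1]; [lra|].
      set (p := lam + 1). assert (Hp : 0 < p) by (unfold p; lra).
      destruct (Rlt_dec 0 lam) as [Hpos|Hneg].
      + exists (lam / (2 * p)). split; [apply Rdiv_lt_0_compat; lra|]. intros u Hu.
        assert (E : 2 * ((Rpower u p - u + lam * (1 - u)) / (lam * p)) - 1 / p
                    = (lam - 2 * p * u + 2 * Rpower u p) * / (lam * p)) by (unfold p; field; lra).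
        assert (0 <= (lam - 2 * p * u + 2 * Rpower u p) * / (lam * p)).
        { apply Rmult_le_pos.
          - pose proof (Rpower_pos u p).
            assert (Hpu : p * u <= p * (lam / (2 * p))) by (apply Rmult_le_compat_l; lra).
            replace (p * (lam / (2 * p))) with (lam / 2) in Hpu by (unfold p; field; lra). lra.
          - apply Rlt_le, Rinv_0_lt_compat. nra. }
        fold p. lra.
      + assert (Hn : lam < 0) by lra.
        set (b := Rpower (- lam / 2) (1 / p)).
        assert (Hb : 0 < b) by apply Rpower_pos.
        exists b. split; auto. intros u Hu.
        assert (Hbp : Rpower b p = - lam / 2).
        { unfold b. rewrite Rpower_mult. replace (1 / p * p) with 1 by (unfold p; field; lra).
          apply Rpower_1; lra. }
        assert (Hup : Rpower u p < - lam / 2).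
        { rewrite <- Hbp. apply Rlt_Rpower_l; lra. }
        assert (E : 2 * ((Rpower u p - u + lam * (1 - u)) / (lam * p)) - 1 / p
                    = (- lam + 2 * p * u - 2 * Rpower u p) * / (- lam * p)) by (unfold p; field; lra).
        assert (0 <= (- lam + 2 * p * u - 2 * Rpower u p) * / (- lam * p)).
        { apply Rmult_le_pos.
          - assert (0 <= p * u) by nra. lra.
          - apply Rlt_le, Rinv_0_lt_compat. nra. }
        fold p. lra. }
  destruct Hd as [d [Hd Hdu]].
  apply (filterlim_ext_loc (fun _ => 0)); [|apply filterlim_const].
  apply (at_right0_intro _ (Rmin d 1)); [apply Rmin_pos; lra|].
  intros u Hu. pose proof (Rmin_l d 1). pose proof (Rmin_r d 1).
  unfold lower_cond. rewrite PD_eq by lra. rewrite pinv_zero; auto.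
  - unfold Rdiv; ring.
  - assert (0 < F lam u) by (apply F_pos; lra). lra.
  - apply Hdu; lra.
Qed.

Lemma lower_m1 : filterlim (lower_cond (-1)) (at_right 0) (locally 0).
Proof.
  assert (HF : forall x, F (-1) x = x - 1 - ln x).
  { intros x. unfold F. destruct (Req_EM_T (-1) 0); [lra|]. destruct (Req_EM_T (-1) (-1)); [reflexivity|lra]. }
  apply filterlim_locally. intros eps.
  assert (He2 : 0 < exp 2) by apply exp_pos.
  assert (Hed : 0 < eps / exp 2) by (apply Rdiv_lt_0_compat; [apply cond_pos|auto]).
  apply (at_right0_intro _ (Rmin 1 (eps / exp 2))); [apply Rmin_pos; lra|].
  intros u Hu. pose proof (Rmin_l 1 (eps / exp 2)). pose proof (Rmin_r 1 (eps / exp 2)).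
  assert (Hu0 : 0 < F (-1) u) by (apply F_pos; lra).
  destruct (pinv_spec (-1) (2 * F (-1) u)) as [Hc Ec].
  - lra.
  - rewrite phi0. destruct (Rlt_dec (-1) (-1)); [lra|]. simpl. exact I.
  - set (t := 2 * F (-1) u). assert (0 <= t) by (unfold t; lra). exists (exp (- (t + 1))). split; [split|].
    + apply exp_pos.
    + apply Rle_trans with (exp 0); [apply exple; lra | rewrite exp_0; lra].
    + rewrite HF, ln_exp. pose proof (exp_pos (- (t + 1))). lra.
  - apply ball_R. unfold lower_cond. rewrite PD_eq by lra.
    set (c := phi_pinv (-1) (Finite (2 * F (-1) u))) in *.
    rewrite !HF in Ec.
    assert (Hlc : ln c <= 2 + 2 * ln u) by lra.
    assert (Hc2 : c <= exp 2 * u * u).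
    { assert (Eu : exp 2 * u * u = exp (2 + ln u + ln u)) by (rewrite !exp_plus, exp_ln by lra; ring).
      rewrite Eu. rewrite <- (exp_ln c) by lra. apply exple. lra. }
    rewrite Rminus_0_r, Rabs_right.
    + apply (Rle_lt_trans _ (exp 2 * u)).
      * apply Rle_div_l; lra.
      * assert (u < eps / exp 2) by lra.
        apply (Rmult_lt_compat_l (exp 2)) in H1; auto.
        replace (exp 2 * (eps / exp 2)) with (pos eps) in H1 by (field; lra). lra.
    + apply Rle_ge, Rlt_le, Rdiv_lt_0_compat; lra.
Qed.

Lemma lower_lt lam : lam < -1 ->
  filterlim (lower_cond lam) (at_right 0) (locally (Rpower 2 (1 / (lam + 1)))).
Proof.
  intros Hl. set (p := lam + 1). assert (Hp : p < 0) by (unfold p; lra).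
  assert (Hq : 0 < lam * p) by nra.
  assert (HF : forall x, F lam x = (Rpower x p - x + lam * (1 - x)) / (lam * p)).
  { intros x. unfold F. destruct (Req_EM_T lam 0); [lra|]. destruct (Req_EM_T lam (-1)); [lra|]. reflexivity. }
  assert (Key : forall u, 0 < u < 1 ->
     let c := phi_pinv lam (Finite (2 * F lam u)) in
     0 < c <= 1 /\ Rpower c p = 2 * Rpower u p + (lam + p * c - 2 * p * u)).
  { intros u Hu c.
    assert (Hu0 : 0 < F lam u) by (apply F_pos; lra).
    destruct (pinv_spec lam (2 * F lam u)) as [Hc Ec].
    - lra.
    - rewrite phi0. destruct (Rlt_dec (-1) lam); [lra|]. simpl. exact I.
    - set (t := 2 * F lam u). assert (Ht : 0 <= t) by (unfold t; lra).
      set (B := lam * p * t + 1 - lam).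
      assert (HB : 1 <= B) by (unfold B; nra).
      set (a := Rpower B (1 / p)). exists a.
      assert (Hap : Rpower a p = B).
      { unfold a. rewrite Rpower_mult. replace (1 / p * p) with 1 by (field; lra). apply Rpower_1; lra. }
      assert (Ha1 : a <= 1).
      { unfold a, Rpower. apply Rle_trans with (exp 0); [apply exple | rewrite exp_0; lra].
        assert (0 <= ln B) by (rewrite <- ln_1; apply lnle; lra).
        assert (1 / p < 0) by (unfold Rdiv; rewrite Rmult_1_l; apply Rinv_lt_0_compat; lra).
        nra. }
      assert (Ha0 : 0 < a) by apply Rpower_pos.
      split; [lra|]. rewrite HF, Hap.
      apply Rmult_le_reg_r with (lam * p); auto.
      unfold Rdiv. rewrite Rmult_assoc, Rinv_l by lra. unfold B. nra.
    - fold c in Hc, Ec. split; auto. rewrite !HF in Ec.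
      set (X := Rpower c p - c + lam * (1 - c)) in Ec.
      set (Y := Rpower u p - u + lam * (1 - u)) in Ec.
      assert (X = 2 * Y).
      { replace X with (X / (lam * p) * (lam * p)) by (field; lra). rewrite Ec. field. lra. }
      unfold X, Y in H. unfold p in *. lra. }
  set (h := fun z => Rpower z (1 / p)).
  apply (filterlim_ext_loc (fun u => h (Rpower (lower_cond lam u) p))).
  { apply (at_right0_intro _ 1); [lra|]. intros u Hu. destruct (Key u Hu) as [Hc _].
    unfold h. rewrite Rpower_mult. replace (p * (1 / p)) with 1 by (field; lra).
    apply Rpower_1. unfold lower_cond. rewrite PD_eq by lra. apply Rdiv_lt_0_compat; lra. }
  apply (filterlim_comp _ _ _ (fun u => Rpower (lower_cond lam u) p) h _ (locally 2)).
  2: { apply (proj1 (continuity_pt_filterlim h 2)).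
       apply (deriv_cont _ (1 / p * Rpower 2 (1 / p - 1))). apply is_derive_Rpower; lra. }
  apply filterlim_locally. intros eps.
  set (Bd := Rabs lam + 3 * Rabs p + 1).
  assert (HBd : 0 < Bd) by (unfold Bd; pose proof (Rabs_pos lam); pose proof (Rabs_pos p); lra).
  set (d := Rpower (eps / Bd) (1 / (- p))).
  assert (Hd : 0 < d) by apply Rpower_pos.
  assert (Hdp : Rpower d (- p) = eps / Bd).
  { unfold d. rewrite Rpower_mult. replace (1 / - p * - p) with 1 by (field; lra). apply Rpower_1.
    apply Rdiv_lt_0_compat; [apply cond_pos|lra]. }
  apply (at_right0_intro _ (Rmin 1 d)); [apply Rmin_pos; lra|].
  intros u Hu. pose proof (Rmin_l 1 d). pose proof (Rmin_r 1 d).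
  destruct (Key u ltac:(lra)) as [Hc Hcp].
  set (c := phi_pinv lam (Finite (2 * F lam u))) in *.
  apply ball_R. unfold lower_cond. rewrite PD_eq by lra. fold c.
  assert (Hinv : Rpower (/ u) p = / Rpower u p).
  { unfold Rpower. rewrite ln_Rinv by lra. rewrite <- exp_Ropp. f_equal. ring. }
  assert (Hneg : Rpower u (- p) = / Rpower u p) by apply Rpower_Ropp.
  assert (Hup0 : 0 < Rpower u p) by apply Rpower_pos.
  unfold Rdiv. rewrite <- Rpower_mult_distr by (try apply Rinv_0_lt_compat; lra).
  rewrite Hinv, Hcp.
  replace ((2 * Rpower u p + (lam + p * c - 2 * p * u)) * / Rpower u p - 2)
    with ((lam + p * c - 2 * p * u) * Rpower u (- p)) by (rewrite Hneg; field; lra).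
  assert (Hsm : Rpower u (- p) < eps / Bd).
  { rewrite <- Hdp. apply Rlt_Rpower_l; lra. }
  assert (HE : Rabs (lam + p * c - 2 * p * u) <= Bd).
  { unfold Bd. eapply Rle_trans; [apply Rabs_triang|].
    eapply Rle_trans; [apply Rplus_le_compat_r, Rabs_triang|].
    rewrite Rabs_Ropp, !Rabs_mult, (Rabs_right c), (Rabs_right u), (Rabs_right 2) by lra.
    pose proof (Rabs_pos p). nra. }
  rewrite Rabs_mult, (Rabs_right (Rpower u (- p))) by (apply Rle_ge, Rlt_le, Rpower_pos).
  pose proof (Rpower_pos u (- p)).
  apply Rle_lt_trans with (Bd * Rpower u (- p)).
  - apply Rmult_le_compat_r; lra.
  - apply (Rmult_lt_compat_l Bd) in Hsm; auto.
    replace (Bd * (eps / Bd)) with (pos eps) in Hsm by (field; lra). lra.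
Qed.

Theorem theorem4 :
  forall lam : R,
    (lam < -1 ->
       filterlim (lower_cond lam) (at_right 0) (locally (Rpower 2 (1 / (lam + 1))))) /\
    (-1 <= lam ->
       filterlim (lower_cond lam) (at_right 0) (locally 0)) /\
    filterlim (upper_cond lam) (at_left 1) (locally (2 - sqrt 2)).
Proof.
  intros lam. split; [apply lower_lt|split].
  - intros H. destruct (Req_dec lam (-1)) as [E|E].
    + subst lam. apply lower_m1.
    + apply lower_gt. lra.
  - apply upper.
Qed.
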